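(* Let $X=[x_1,\dots,x_m]\in\mathbb{R}^{d_x\times m}$ be a data matrix and $Y\in\mathbb{R}^{d_y\times m}$ a label matrix, and let $\tilde X=\begin{bmatrix}X^T & \mathbf{1}_m\end{bmatrix}^T\in\mathbb{R}^{(d_x+1)\times m}$. For a function $h:\mathbb{R}\to\mathbb{R}$ applied entrywise, consider the empirical risk of the one-hidden-layer network $$\ell(W_1,W_2,b_1,b_2)=\tfrac12\big\|W_2\,h(W_1X+b_1\mathbf{1}_m^T)+b_2\mathbf{1}_m^T-Y\big\|_F^2,$$ with $W_1\in\mathbb{R}^{d_1\times d_x}$, $b_1\in\mathbb{R}^{d_1}$, $W_2\in\mathbb{R}^{d_y\times d_1}$, $b_2\in\mathbb{R}^{d_y}$. Suppose that: (1) $d_y=1$, and there is no matrix $R\in\mathbb{R}^{1\times(d_x+1)}$ with $Y=R\tilde X$; (2) the data points $x_1,\dots,x_m$ are pairwise distinct; (3) $h(x)=\max\{s_+x,0\}+\min\{s_-x,0\}$ for constants $s_+>0$, $s_-\ge 0$, $s_+\neq s_-$; (4) $d_1\ge 2$. Then $\ell$ has a local minimum that is not a global minimum (a spurious local minimum) whose risk equals the linear least squares risk $\min_{R\in\mathbb{R}^{1\times(d_x+1)}}\tfrac12\|R\tilde X-Y\|_F^2$. Moreover, there are infinitely many such local minima.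
   Context: $\mathbf{1}_m$ denotes the all-ones column vector in $\mathbb{R}^m$, and $\|\cdot\|_F$ the Frobenius norm. A spurious local minimum is a local minimum of $\ell$ at which $\ell$ is strictly larger than its infimum over all parameters. *)

(* Defs.v *)
From mathcomp Require Import all_boot all_order all_algebra.
From mathcomp Require Import reals.
Set Implicit Arguments. Unset Strict Implicit. Unset Printing Implicit Defensive.
Import Order.TTheory GRing.Theory Num.Theory.
Local Open Scope ring_scope.

Section Defs.
Variable R : realType.

Definition frob2 (p q : nat) (A : 'M[R]_(p, q)) : R :=
  \sum_(i < p) \sum_(j < q) (A i j) ^+ 2.

Definition leaky (sp sm : R) (x : R) : R :=
  Num.max (sp * x) 0 + Num.min (sm * x) 0.

Definition Xtilde (dx m : nat) (X : 'M[R]_(dx, m)) : 'M[R]_(dx + 1, m) :=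
  col_mx X (const_mx 1).

Definition params (dx d1 dy : nat) : Type :=
  ('M[R]_(d1, dx) * 'M[R]_(dy, d1) * 'cV[R]_d1 * 'cV[R]_dy)%type.

Definition risk (dx d1 dy m : nat) (h : R -> R)
    (X : 'M[R]_(dx, m)) (Y : 'M[R]_(dy, m)) (p : params dx d1 dy) : R :=
  let: (W1, W2, b1, b2) := p in
  2^-1 * frob2 (W2 *m map_mx h (W1 *m X + b1 *m const_mx 1)
                + b2 *m const_mx 1 - Y).

(* entrywise closeness of parameter tuples (defines the usual topology) *)
Definition mx_near (p q : nat) (eps : R) (A B : 'M[R]_(p, q)) : Prop :=
  forall i j, `|A i j - B i j| < eps.

Definition params_near (dx d1 dy : nat) (eps : R) (p q : params dx d1 dy) : Prop :=
  let: (A1, A2, a1, a2) := p in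
  let: (B1, B2, c1, c2) := q in
  [/\ mx_near eps A1 B1, mx_near eps A2 B2, mx_near eps a1 c1 & mx_near eps a2 c2].

Definition is_local_min (T : Type) (near : R -> T -> T -> Prop) (f : T -> R) (x : T) : Prop :=
  exists2 eps : R, 0 < eps & forall y, near eps x y -> f x <= f y.

Definition is_spurious_local_min (T : Type) (near : R -> T -> T -> Prop)
    (f : T -> R) (x : T) : Prop :=
  is_local_min near f x /\ exists y, f y < f x.

Definition is_lsq_min (dx dy m : nat) (X : 'M[R]_(dx, m)) (Y : 'M[R]_(dy, m)) (v : R) : Prop :=
  (forall Rm : 'M[R]_(dy, dx + 1), v <= 2^-1 * frob2 (Rm *m Xtilde X - Y)) /\
  (exists Rm : 'M[R]_(dy, dx + 1), v = 2^-1 * frob2 (Rm *m Xtilde X - Y)).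

End Defs.

(* Main.v *)
Require Import Defs.
From mathcomp Require Import all_boot all_order all_algebra.
From mathcomp Require Import reals ring lra.
Import Order.TTheory GRing.Theory Num.Theory.
Local Open Scope ring_scope.


Lemma dot_row {R : realType} m (M N : 'M[R]_(1, m)) :
  (M *m N^T) 0 0 = \sum_j M 0 j * N 0 j.
Proof. by rewrite mxE; apply: eq_bigr => j _; rewrite mxE. Qed.

Lemma rv_self0 {R : realType} m (u : 'rV[R]_m) : u *m u^T = 0 -> u = 0.
Proof.
move=> H.
have hs : \sum_j u 0 j ^+ 2 = 0.
  have : (u *m u^T) 0 0 = 0 by rewrite H mxE.
  by rewrite dot_row => h; rewrite -[RHS]h; apply: eq_bigr => j _; rewrite expr2.
apply/matrixP => i j; rewrite (ord1 i) mxE.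
have := psumr_eq0P (P := predT) (fun j _ => sqr_ge0 (u 0 j)) hs (i := j) isT.
by move/eqP; rewrite sqrf_eq0 => /eqP.
Qed.

Lemma lsq_exists {R : realType} {n m} (A : 'M[R]_(n, m)) (Y : 'rV[R]_m) :
  exists Rs : 'rV_n, (Rs *m A - Y) *m A^T = 0.
Proof.
have hcap : (A :&: kermx A^T)%MS = 0.
  apply/row_matrixP => i; rewrite row0.
  have := row_sub i (A :&: kermx A^T)%MS.
  rewrite sub_capmx => /andP[/submxP[w hw] /sub_kermxP hk].
  apply: rv_self0.
  by rewrite {2}hw trmx_mul mulmxA hk mul0mx.
have hr : \rank (A *m A^T) = \rank A^T.
  by have := mxrank_mul_ker A A^T; rewrite hcap mxrank0 addn0 mxrank_tr.
have heq : (A *m A^T == A^T)%MS.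
  by case: (mxrank_leqif_eq (submxMl A A^T)) => _ <-; rewrite hr.
have : (Y *m A^T <= A *m A^T)%MS by rewrite (eqmxP heq) submxMl.
case/submxP => D hD; exists D.
by rewrite mulmxBl -mulmxA -hD subrr.
Qed.

Lemma frob2_row {R : realType} m (M : 'M[R]_(1, m)) :
  frob2 M = \sum_j M 0 j ^+ 2.
Proof. by rewrite /frob2 big_ord1. Qed.


Lemma lsq_lb {R : realType} {n m} {A : 'M[R]_(n, m)} {Y : 'rV[R]_m} {Rs} :
  (Rs *m A - Y) *m A^T = 0 ->
  forall Rm, frob2 (Rs *m A - Y) <= frob2 (Rm *m A - Y).
Proof.
move=> hE Rm.
set E := Rs *m A - Y.
set D := (Rm - Rs) *m A.
have hRm : Rm *m A - Y = D + E by rewrite /D /E mulmxBl addrA subrK.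
have hDE : \sum_j D 0 j * E 0 j = 0.
  rewrite -dot_row /D -mulmxA.
  have -> : A *m E^T = 0 by rewrite -[A]trmxK -trmx_mul hE trmx0.
  by rewrite mulmx0 mxE.
rewrite hRm !frob2_row.
have -> : \sum_j (D + E) 0 j ^+ 2
   = \sum_j D 0 j ^+ 2 + \sum_j (D 0 j * E 0 j) *+ 2 + \sum_j E 0 j ^+ 2.
  rewrite -!big_split /=; apply: eq_bigr => j _; rewrite mxE sqrrD.
  by rewrite mulr2n.
rewrite sumrMnl hDE mul0rn addr0 lerDr.
by apply: sumr_ge0 => j _; apply: sqr_ge0.
Qed.



Lemma leaky_pos {R : realType} (sp sm z : R) : 0 <= sp -> 0 <= sm -> 0 <= z ->
  leaky sp sm z = sp * z.
Proof.
move=> hp hm hz; rewrite /leaky.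
by rewrite max_l ?mulr_ge0 // min_r ?mulr_ge0 // addr0.
Qed.

Lemma leaky_dec {R : realType} (sp sm z : R) : 0 <= sp -> 0 <= sm ->
  leaky sp sm z = sm * z + (sp - sm) * Num.max z 0.
Proof.
move=> hp hm; have [hz|hz] := leP 0 z.
  by rewrite leaky_pos //; ring.
rewrite /leaky mulr0 addr0.
have hz' : sp * z <= 0 by apply: mulr_ge0_le0 hp (ltW hz).
have hz'' : sm * z <= 0 by apply: mulr_ge0_le0 hm (ltW hz).
by rewrite max_r // min_l // add0r.
Qed.

Lemma riskE {R : realType} dx d1 m (h : R -> R) (X : 'M[R]_(dx, m)) (Y : 'M[R]_(1, m))
   (W1 : 'M[R]_(d1, dx)) W2 b1 b2 :
  risk h X Y (W1, W2, b1, b2) = 2^-1 * \sum_j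
    (\sum_k W2 0 k * h (\sum_i W1 k i * X i j + b1 k 0) + b2 0 0 - Y 0 j) ^+ 2.
Proof.
rewrite /risk frob2_row; congr (_ * _); apply: eq_bigr => j _.
rewrite !mxE big_ord1 mxE mulr1; congr ((_ + _ - _) ^+ 2).
apply: eq_bigr => k _; rewrite !mxE big_ord1 mxE mulr1.
by congr (_ * h (_ + _)); apply: eq_bigr => i _; rewrite mxE.
Qed.


Lemma sep_below {R : realType} m (Q : pred 'I_m) (f : 'I_m -> R) (b : R) :
  (forall j, Q j -> f j < b) -> exists c, c < b /\ forall j, Q j -> f j < c.
Proof.
move=> hb; case: (pickP Q) => [j2 hj2 | hQ].
  case: (arg_maxP f hj2) => k hk hmax.
  have [h1 h2] := midf_lt (hb k hk).
  exists ((f k + b) / 2); split => // j hj.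
  exact: le_lt_trans (hmax j hj) h1.
exists (b - 1); split; first by rewrite gtrBl ltr01.
by move=> j; rewrite hQ.
Qed.

Lemma sep_lemma {R : realType} dx m (X : 'M[R]_(dx, m)) (d : 'rV[R]_m)
  (hX : forall i j : 'I_m, col i X = col j X -> i = j) (hd : d != 0) :
  exists (w : 'rV[R]_dx) (c : R),
    \sum_j d 0 j * Num.max (\sum_i w 0 i * X i j - c) 0 != 0.
Proof.
have : [exists j, d 0 j != 0].
  apply: contraR hd => /existsPn h; apply/eqP/matrixP => i j.
  by rewrite (ord1 i) mxE; move: (h j); rewrite negbK => /eqP.
case/existsP => j1 hj1.
pose nrm j := \sum_i X i j ^+ 2.
case: (arg_maxP nrm (P := fun j => d 0 j != 0) hj1) => j0 hj0 hmax.
pose u j := \sum_i X i j0 * X i j.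
have hu : forall j, d 0 j != 0 -> j != j0 -> u j < nrm j0.
  move=> j hj hjj0.
  have hne : col j X != col j0 X by apply: contra hjj0 => /eqP /hX ->.
  have [i hi] : exists i, X i j != X i j0.
    apply/existsP; apply: contraR hne => /existsPn h; apply/eqP/matrixP => i k.
    by rewrite (ord1 k) !mxE; move: (h i); rewrite negbK => /eqP.
  have hpos : 0 < \sum_i (X i j - X i j0) ^+ 2.
    rewrite (bigD1 i) //=.
    have h1 : 0 < (X i j - X i j0) ^+ 2.
      by rewrite lt_def sqr_ge0 andbT sqrf_eq0 subr_eq0.
    have h2 : 0 <= \sum_(k | k != i) (X k j - X k j0) ^+ 2.
      by apply: sumr_ge0 => k _; apply: sqr_ge0.
    lra.
  have hexp : \sum_i (X i j - X i j0) ^+ 2 = nrm j + nrm j0 - (u j) *+ 2.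
    rewrite /nrm /u -sumrMnl -big_split /= -sumrB.
    by apply: eq_bigr => k _; ring.
  have := hmax j hj; rewrite /= -/(nrm j) => hle.
  rewrite hexp in hpos.
  rewrite mulr2n in hpos.
  lra.
have [c [hc hcj]] := @sep_below R m (fun j => (d 0 j != 0) && (j != j0))
  u (nrm j0) (fun j h => hu j (proj1 (andP h)) (proj2 (andP h))).
exists (\row_i X i j0), c.
rewrite (eq_bigr (fun j => d 0 j * Num.max (u j - c) 0)); last first.
  move=> j _; congr (_ * Num.max (_ - _) _).
  by apply: eq_bigr => i _; rewrite mxE.
rewrite (bigD1 j0) //= big1 ?addr0; last first.
  move=> j hj; have [->|hdj] := eqVneq (d 0 j) 0; first by rewrite mul0r.
  have hlt := hcj j (introT andP (conj hdj hj)).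
  have hle : u j - c <= 0 by rewrite subr_le0 ltW.
  by rewrite max_r // mulr0.
have huj0 : u j0 = nrm j0 by apply: eq_bigr => i _; rewrite expr2.
rewrite huj0 max_l; last by rewrite subr_ge0 ltW.
by rewrite mulf_neq0 // subr_eq0 gt_eqF.
Qed.


Lemma le_sum_term {R : realType} {m} (F : 'I_m -> R) j :
  (forall k, 0 <= F k) -> F j <= \sum_k F k.
Proof. by move=> h; rewrite (bigD1 j) //= lerDl sumr_ge0. Qed.
Lemma le_sum_seq {R : realType} (T : eqType) (f : T -> R) (s : seq T) q :
  q \in s -> `|f q| <= \sum_(x <- s) `|f x|.
Proof.
elim: s => [//|a s IH]; rewrite in_cons big_cons => /orP[/eqP ->|h].
  by rewrite lerDl sumr_ge0.
by apply: le_trans (IH h) _; rewrite lerDr.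
Qed.

Theorem theorem1 (R : realType) (dx d1 m : nat)
    (X : 'M[R]_(dx, m)) (Y : 'M[R]_(1, m)) (sp sm : R)
    (hY : ~ exists Rm : 'M[R]_(1, dx + 1), Y = Rm *m Xtilde X)
    (hX : forall i j : 'I_m, col i X = col j X -> i = j)
    (hsp : 0 < sp) (hsm : 0 <= sm) (hs : sp != sm)
    (hd1 : (2 <= d1)%N) :
  let P := fun p : params R dx d1 1 =>
    is_spurious_local_min (@params_near R dx d1 1)
      (risk (leaky sp sm) X Y) p /\
    is_lsq_min X Y (risk (leaky sp sm) X Y p) in
  (exists p, P p) /\
  (forall s : seq (params R dx d1 1), exists p, P p /\ p \notin s).
Proof.
case: d1 hd1 => [|[|d]] // _.
move=> P; rewrite /P {P}.
set A := Xtilde X.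
have [Rs hRs] := lsq_exists A Y.
set vs := 2^-1 * frob2 (Rs *m A - Y).
have h2 : 0 <= 2^-1 :> R by rewrite invr_ge0 ler0n.
have hlsq : is_lsq_min X Y vs.
  split; last by exists Rs.
  by move=> Rm; rewrite /vs ler_wpM2l // (lsq_lb hRs Rm).
set r := lsubmx Rs; set be := rsubmx Rs.
have hRsA : forall j, (Rs *m A) 0 j = \sum_i r 0 i * X i j + be 0 0.
  move=> j; rewrite /A /Xtilde -{1}(hsubmxK Rs) mul_row_col !mxE big_ord1 !mxE mulr1.
  by [].
have hlin : forall (W1 : 'M[R]_(d.+2, dx)) (W2 : 'M[R]_(1, d.+2)) (b1 : 'cV[R]_(d.+2)) (b2 : 'cV[R]_1),
    (forall k j, 0 <= (W1 *m X + b1 *m const_mx 1) k j) ->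
    risk (leaky sp sm) X Y (W1, W2, b1, b2) =
    2^-1 * frob2 (row_mx (sp *: (W2 *m W1)) (sp *: (W2 *m b1) + b2) *m A - Y).
  move=> W1 W2 b1 b2 hpos.
  have hmap : map_mx (leaky sp sm) (W1 *m X + b1 *m const_mx 1)
            = sp *: (W1 *m X + b1 *m const_mx 1).
    by apply/matrixP => k j; rewrite [LHS]mxE [RHS]mxE leaky_pos // ltW.
  rewrite /risk hmap; congr (_ * frob2 (_ - _)).
  rewrite /A /Xtilde mul_row_col -scalemxAr mulmxDr scalerDr !mulmxA mulmxDl -!scalemxAl addrA.
  by [].

have hlb : forall (W1 : 'M[R]_(d.+2, dx)) (W2 : 'M[R]_(1, d.+2)) (b1 : 'cV[R]_(d.+2)) (b2 : 'cV[R]_1),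
    (forall k j, 0 <= (W1 *m X + b1 *m const_mx 1) k j) ->
    vs <= risk (leaky sp sm) X Y (W1, W2, b1, b2).
  by move=> W1 W2 b1 b2 hpos; rewrite hlin // /vs ler_wpM2l // (lsq_lb hRs).
pose W10 : 'M[R]_(d.+2, dx) := \matrix_(k, i) r 0 i.
pose W20 : 'M[R]_(1, d.+2) := \row_k (if k == ord0 then sp^-1 else 0).
pose p0 K : params R dx d.+2 1 := (W10, W20, const_mx K, const_mx (be 0 0 - K)).
pose K0 := 1 + \sum_j `|\sum_i r 0 i * X i j|.
have hpre : forall K : R, K0 <= K -> forall j, 1 <= \sum_i r 0 i * X i j + K.
  move=> K hK j.
  have h1 := le_sum_term (fun j => `|\sum_i r 0 i * X i j|) j (fun k => normr_ge0 _).
  have h3 := ler_norm (- (\sum_i r 0 i * X i j)); rewrite normrN in h3.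
  rewrite /K0 in hK; simpl in h1; lra.
have hpreE : forall (W1 : 'M[R]_(d.+2, dx)) (b1 : 'cV[R]_(d.+2)) k j,
    (W1 *m X + b1 *m const_mx 1) k j = \sum_i W1 k i * X i j + b1 k 0.
  by move=> W1 b1 k j; rewrite !mxE big_ord1 mxE mulr1.
have hW20 : forall n (M : 'M[R]_(d.+2, n)), W20 *m M = sp^-1 *: row ord0 M.
  move=> n M; apply/matrixP => i j; rewrite (ord1 i) !mxE big_ord_recl big1 ?addr0.
    by rewrite mxE eqxx.
  by move=> k _; rewrite mxE eq_sym (negbTE (neq_lift _ _)) mul0r.
have hpos0 : forall K : R, K0 <= K -> forall k j, 0 <= (W10 *m X + (const_mx K : 'cV[R]_(d.+2)) *m const_mx 1) k j.
  move=> K hK k j; rewrite hpreE.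
  under eq_bigr do rewrite mxE.
  by rewrite mxE; apply: le_trans (hpre K hK j); apply: ler01.
have hrisk0 : forall K : R, K0 <= K -> risk (leaky sp sm) X Y (p0 K) = vs.
  move=> K hK; rewrite /p0 hlin; last exact: hpos0.
  rewrite /vs; congr (_ * frob2 (_ *m A - Y)).
  rewrite -[RHS](hsubmxK Rs); congr row_mx.
    rewrite hW20 scalerA mulfV ?gt_eqF // scale1r.
    by apply/matrixP => i j; rewrite (ord1 i) !mxE.
  rewrite hW20; apply/matrixP => i j; rewrite (ord1 i) (ord1 j) !mxE.
  by rewrite mulrA mulfV ?gt_eqF // mul1r addrC subrK.
pose S := \sum_j \sum_i `|X i j|.
have hS : 0 <= S by apply: sumr_ge0 => j _; apply: sumr_ge0 => i _; apply: normr_ge0.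
pose eps := (1 + S)^-1.
have heps0 : 0 < eps by rewrite invr_gt0; lra.
have heps1 : eps + eps * S = 1.
  by rewrite -{1}(mulr1 eps) -mulrDr mulVf //; apply/eqP; lra.
have hloc : forall K : R, K0 <= K -> is_local_min (@params_near R dx d.+2 1)
     (risk (leaky sp sm) X Y) (p0 K).
  move=> K hK; exists eps => //.
  move=> q; rewrite hrisk0 //; case: q => [[[W1 W2] b1] b2] [hW1 _ hb1 _].
  apply: hlb => k j; rewrite hpreE.
  have e2 : `|b1 k 0 - K| < eps by rewrite distrC; have := hb1 k 0; rewrite mxE.
  have hsum : `|\sum_i (W1 k i - r 0 i) * X i j| <= eps * \sum_i `|X i j|.
    rewrite mulr_sumr; apply: le_trans (ler_norm_sum _ _ _) _.
    apply: ler_sum => i _; rewrite normrM ler_wpM2r // ltW // distrC.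
    by have := hW1 k i; rewrite mxE.
  have hXj : \sum_i `|X i j| <= S.
    exact: (le_sum_term (fun j => \sum_i `|X i j|) j
             (fun k => sumr_ge0 _ (fun i _ => normr_ge0 _))).
  have hmul : eps * \sum_i `|X i j| <= eps * S by rewrite ler_wpM2l // ltW.
  have hspl : \sum_i (W1 k i - r 0 i) * X i j
      = \sum_i W1 k i * X i j - \sum_i r 0 i * X i j.
    by rewrite -sumrB; apply: eq_bigr => i _; rewrite mulrBl.
  have h3 := ler_norm (- (\sum_i (W1 k i - r 0 i) * X i j)); rewrite normrN in h3.
  have h4 := ler_norm (- (b1 k 0 - K)); rewrite normrN in h4.
  have h5 := hpre K hK j.
  lra.
set dd := Rs *m A - Y.
have hdd : dd != 0.
  apply/negP => /eqP h0; apply: hY; exists Rs.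
  by apply/esym/eqP; rewrite -subr_eq0 -/dd h0.
have [w [c hwc]] := @sep_lemma R dx m X dd hX hdd.
pose a1 j := \sum_i w 0 i * X i j - c.
pose g j := leaky sp sm (a1 j).
have horth : \sum_j dd 0 j * a1 j = 0.
  pose rho : 'rV[R]_(dx + 1) := row_mx w (const_mx (- c)).
  have hra : forall j, (rho *m A) 0 j = a1 j.
    by move=> j; rewrite /A /Xtilde mul_row_col !mxE big_ord1 !mxE mulr1.
  have -> : \sum_j dd 0 j * a1 j = (dd *m (rho *m A)^T) 0 0.
    by rewrite dot_row; apply: eq_bigr => j _; rewrite hra.
  by rewrite trmx_mul mulmxA hRs mul0mx mxE.
pose nu := \sum_j dd 0 j * g j.
have hnu : nu != 0.
  have -> : nu = sm * (\sum_j dd 0 j * a1 j)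
               + (sp - sm) * \sum_j dd 0 j * Num.max (a1 j) 0.
    rewrite /nu !mulr_sumr -big_split; apply: eq_bigr => j _.
    by rewrite /= /g (leaky_dec _ _ _ (ltW hsp) hsm); ring.
  by rewrite horth mulr0 add0r mulf_neq0 // subr_eq0.
pose G := \sum_j g j ^+ 2.
have hG : 0 < G.
  rewrite lt_def sumr_ge0 ?andbT; last by move=> j _; apply: sqr_ge0.
  apply: contra hnu => /eqP hG0.
  have hg : forall j, g j = 0.
    move=> j; have := psumr_eq0P (P := predT) (fun j _ => sqr_ge0 (g j)) hG0 (i := j) isT.
    by move/eqP; rewrite sqrf_eq0 => /eqP.
  by apply/eqP; rewrite /nu big1 // => j _; rewrite hg mulr0.
pose mu := - (nu / G).
pose W1s : 'M[R]_(d.+2, dx) := \matrix_(k, i) (if k == ord0 then r 0 i else w 0 i).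
pose b1s : 'cV[R]_(d.+2) := \col_k (if k == ord0 then K0 else - c).
pose W2s : 'M[R]_(1, d.+2) :=
  \row_k (if k == ord0 then sp^-1 else if val k == 1%N then mu else 0).
pose b2s : 'cV[R]_1 := const_mx (be 0 0 - K0).
have hwit : risk (leaky sp sm) X Y (W1s, W2s, b1s, b2s) < vs.
  have hout : forall j, \sum_k W2s 0 k * leaky sp sm (\sum_i W1s k i * X i j + b1s k 0)
      + b2s 0 0 - Y 0 j = dd 0 j + mu * g j.
    move=> j; rewrite [\sum_(k < d.+2) _]big_ord_recl [\sum_(k < d.+1) _]big_ord_recl.
    rewrite [\sum_(k < d) _]big1 ?addr0; last first.
      by move=> k _; rewrite mxE /= mul0r.
    have e0 : \sum_i W1s ord0 i * X i j = \sum_i r 0 i * X i j.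
      by apply: eq_bigr => i _; rewrite mxE.
    have e1 : \sum_i W1s (lift ord0 ord0) i * X i j = \sum_i w 0 i * X i j.
      by apply: eq_bigr => i _; rewrite mxE.
    have hd : dd 0 j = \sum_i r 0 i * X i j + be 0 0 - Y 0 j.
      by rewrite /dd -hRsA !mxE.
    rewrite hd e0 e1 !mxE /=.
    have hz : 0 <= \sum_i r 0 i * X i j + K0.
      by apply: le_trans (hpre K0 (lexx _) j); apply: ler01.
    rewrite (leaky_pos _ _ _ (ltW hsp) hsm hz) mulKf ?gt_eqF // /g /a1.
    ring.
  rewrite riskE /vs frob2_row ltr_pM2l ?invr_gt0 ?ltr0n //.
  rewrite (eq_bigr (fun j => (dd 0 j + mu * g j) ^+ 2)); last first.
    by move=> j _; rewrite hout.
  have -> : \sum_j (dd 0 j + mu * g j) ^+ 2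
      = \sum_j dd 0 j ^+ 2 + ((mu * nu) *+ 2 + mu ^+ 2 * G).
    rewrite /nu /G !mulr_sumr -sumrMnl -!big_split /=.
    by apply: eq_bigr => j _; ring.
  have -> : (mu * nu) *+ 2 + mu ^+ 2 * G = - (nu ^+ 2 / G).
    by rewrite /mu; field; rewrite gt_eqF.
  rewrite gtrDl oppr_lt0 divr_gt0 //.
  by rewrite lt_def sqr_ge0 andbT sqrf_eq0.
have hPK : forall K : R, K0 <= K ->
    (is_spurious_local_min (@params_near R dx d.+2 1) (risk (leaky sp sm) X Y) (p0 K)
     /\ is_lsq_min X Y (risk (leaky sp sm) X Y (p0 K))).
  move=> K hK; split; last by rewrite hrisk0.
  split; first exact: hloc.
  by exists (W1s, W2s, b1s, b2s); rewrite hrisk0.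
have hK0 : 1 <= K0.
  rewrite /K0 lerDl; apply: sumr_ge0 => j _; apply: normr_ge0.
split; first by exists (p0 K0); apply: hPK.
move=> s.
pose K := K0 + 1 + \sum_(q <- s) `|q.1.2 ord0 ord0|.
have hs0 : 0 <= \sum_(q <- s) `|q.1.2 ord0 ord0| by apply: sumr_ge0 => q _; apply: normr_ge0.
exists (p0 K); split; first by apply: hPK; rewrite /K; lra.
apply/negP => hin.
have := @le_sum_seq R _ (fun q : params R dx d.+2 1 => q.1.2 ord0 ord0) s (p0 K) hin.
rewrite /= mxE => hle.
have := ler_norm K.
rewrite /K in hle *; lra.
Qed.
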